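(* Let $K$ be a field, $S=K[x_1,\ldots,x_n]$, and $\alpha=(k_1,\ldots,k_n)\in\mathbb N^n$. A monomial ideal $I\subset S$ is polymatroidal if and only if its expansion $I^\alpha\subset S^\alpha$ is polymatroidal.
   Context: $\mathbb N$ denotes the positive integers. For $\alpha=(k_1,\ldots,k_n)\in\mathbb N^n$ let $S^\alpha=K[x_{ij}:1\le i\le n,\ 1\le j\le k_i]$ and $P_i=(x_{i1},\ldots,x_{ik_i})\subset S^\alpha$. If $I$ is a monomial ideal with minimal monomial generating set $G(I)=\{\mathbf x^{\mathbf a_1},\ldots,\mathbf x^{\mathbf a_r}\}$, $\mathbf x^{\mathbf a}=x_1^{\mathbf a(1)}\cdots x_n^{\mathbf a(n)}$, its expansion is $I^\alpha=\sum_{l=1}^r P_1^{\mathbf a_l(1)}\cdots P_n^{\mathbf a_l(n)}\subset S^\alpha$. A monomial ideal $I$ is polymatroidal if (i) all elements of $G(I)$ have the same degree, and (ii) whenever $u=x_1^{a_1}\cdots x_n^{a_n}$ and $v=x_1^{b_1}\cdots x_n^{b_n}$ belong to $G(I)$ with $a_i>b_i$, there exists $j$ with $a_j<b_j$ such that $x_j(u/x_i)\in G(I)$. (For $I^\alpha$ the same definition is used in the polynomial ring $S^\alpha$.) *)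

(* Defs.v *)
(* Monomial ideals are modelled combinatorially by their
   monomials (exponent vectors). *)
From mathcomp Require Import all_boot.
Set Implicit Arguments. Unset Strict Implicit. Unset Printing Implicit Defensive.

Section Monomials.
Variable V : finType.

Definition mon := {ffun V -> nat}.

Definition mon_one : mon := [ffun => 0%N].
Definition mon_mul (u v : mon) : mon := [ffun z => u z + v z].
Definition mon_var (x : V) : mon := [ffun z => (z == x : nat)].
Definition mdvd (u v : mon) : bool := [forall z, u z <= v z].
Definition mdeg (u : mon) : nat := \sum_z u z.
Definition mexch (u : mon) (x y : V) : mon :=
  [ffun z => u z - (z == x) + (z == y)].

(* A monomial ideal is given by a finite list of monomial generators;
   its monomials are those divisible by some generator. *)
Definition monideal := seq mon.
Definition in_mi (I : monideal) (m : mon) : bool := has (fun g => mdvd g m) I.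

Definition mi_sum (I J : monideal) : monideal := I ++ J.
Definition mi_mul (I J : monideal) : monideal :=
  [seq mon_mul u v | u <- I, v <- J].
Definition mi_unit : monideal := [:: mon_one].
Definition mi_pow (I : monideal) (a : nat) : monideal := iter a (mi_mul I) mi_unit.

(* G(I): the minimal monomial generating set = minimal monomials of I *)
Definition minGen (I : monideal) (u : mon) : Prop :=
  in_mi I u /\ forall v, in_mi I v -> mdvd v u -> v = u.

Definition polymatroidal (I : monideal) : Prop :=
  (forall u v, minGen I u -> minGen I v -> mdeg u = mdeg v) /\
  (forall u v (i : V), minGen I u -> minGen I v -> v i < u i ->
     exists j : V, u j < v j /\ minGen I (mexch u i j)).
End Monomials.

(* Expansion. Variables of S^alpha: x_{ij}, 1<=i<=n, 1<=j<=k_i, indexed by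
   the dependent pair (i, j) with j : 'I_(k i). *)
Definition expvar (n : nat) (k : 'I_n -> nat) := {i : 'I_n & 'I_(k i)}.

Definition Pideal (n : nat) (k : 'I_n -> nat) (i : 'I_n) : monideal (expvar k) :=
  [seq mon_var (Tagged (fun i => 'I_(k i)) j) | j <- enum 'I_(k i)].

(* I^alpha = sum_l P_1^{a_l(1)} ... P_n^{a_l(n)} *)
Definition expansion (n : nat) (k : 'I_n -> nat) (I : monideal 'I_n)
  : monideal (expvar k) :=
  flatten [seq foldr (fun i acc => mi_mul (mi_pow (Pideal k i) (a i)) acc)
                     (mi_unit _) (enum 'I_n) | a : mon 'I_n <- I].

(* Main.v *)
Require Import Defs.
From mathcomp Require Import all_boot.
From mathcomp Require Import zify.
Set Implicit Arguments. Unset Strict Implicit. Unset Printing Implicit Defensive.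

Lemma natE (a b : nat) : a = b -> a = b. Proof. by []. Qed.

Section Gen.
Variable V : finType.
Implicit Types u v m : mon V.

Lemma mdvdP u v : reflect (forall z, u z <= v z) (mdvd u v).
Proof. exact: forallP. Qed.

Lemma in_miP (I : monideal V) m : reflect (exists2 g, g \in I & mdvd g m) (in_mi I m).
Proof. exact: hasP. Qed.

Lemma in_mi_up (I : monideal V) a b : in_mi I a -> mdvd a b -> in_mi I b.
Proof.
move=> /in_miP [g gI /mdvdP ga] /mdvdP ab; apply/in_miP; exists g => //.
by apply/mdvdP => z; apply: leq_trans (ga z) (ab z).
Qed.

Lemma in_mi_mul (A B : monideal V) m :
  in_mi (mi_mul A B) m <->
  exists m1 m2, [/\ in_mi A m1, in_mi B m2 & forall z, m1 z + m2 z <= m z].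
Proof.
split.
- move=> /in_miP [g /allpairsP [[u v] /= [uA vB ->]] /mdvdP H].
  exists u, v; split.
  + by apply/in_miP; exists u => //; apply/mdvdP.
  + by apply/in_miP; exists v => //; apply/mdvdP.
  + by move=> z; have := H z; rewrite ffunE.
- move=> [m1 [m2 [/in_miP [u uA /mdvdP u1] /in_miP [v vB /mdvdP v2] H]]].
  apply/in_miP; exists (mon_mul u v); first by apply/allpairsP; exists (u, v).
  apply/mdvdP => z; rewrite ffunE; apply: leq_trans (H z).
  exact: leq_add.
Qed.

Lemma in_mi_unit m : in_mi (mi_unit V) m.
Proof.
apply/in_miP; exists (mon_one V); first by rewrite inE.
by apply/mdvdP=> z; rewrite ffunE.
Qed.

Lemma in_mi_flatten (T : eqType) (F : T -> monideal V) (s : seq T) m :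
  in_mi (flatten [seq F a | a <- s]) m <-> exists2 a, a \in s & in_mi (F a) m.
Proof.
elim: s => [|a s IH] /=.
- by split => //; case.
- rewrite /in_mi has_cat; split.
  + case/orP => [H|/IH [b bs Hb]]; first by exists a; rewrite ?mem_head.
    by exists b; rewrite // inE bs orbT.
  + move=> [b]; rewrite inE => /orP [/eqP -> ->//|bs Hb].
    by apply/orP; right; apply/IH; exists b.
Qed.
Lemma mexchE u x y z : 0 < u x -> mexch u x y z + mon_var x z = u z + mon_var y z.
Proof.
move=> Hx; rewrite !ffunE.
case: (@eqP _ z x) => [Ezx|_]; case: (@eqP _ z y) => [Ezy|_] /=;
  try subst; lia.
Qed.

Lemma mexch_id u x : 0 < u x -> mexch u x x = u.
Proof.
move=> Hx; apply/ffunP => z; rewrite ffunE.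
case: (@eqP _ z x) => [->|_] /=; lia.
Qed.
End Gen.

Section Exp.
Variables (n : nat) (k : 'I_n -> nat).
Local Notation E := (expvar k).
Definition bs (f : E -> nat) (i : 'I_n) := \sum_(z | tag z == i) f z.
Definition pim (m : mon E) : mon 'I_n := [ffun i => bs m i].

Lemma bs_mono f g i : (forall z, f z <= g z) -> bs f i <= bs g i.
Proof. by move=> H; apply: leq_sum => z _. Qed.

Lemma bs_add f g i : bs (fun z => f z + g z) i = bs f i + bs g i.
Proof. exact: big_split. Qed.

Lemma bs0 i : bs (fun _ => 0) i = 0.
Proof. by rewrite /bs big1. Qed.

Lemma bs_var z i : bs (mon_var z) i = (tag z == i).
Proof.
rewrite /bs; case: (boolP (tag z == i)) => Hz.
- rewrite (bigD1 z) //= ffunE eqxx big1 // => t /andP[_ tz].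
  by rewrite ffunE (negbTE tz).
- apply: big1 => t /eqP tt; rewrite ffunE; case: eqP => // tz.
  by move: Hz; rewrite -tt tz eqxx.
Qed.

Lemma bs_ex f g i : bs f i < bs g i -> exists z : E, tag z == i /\ f z < g z.
Proof.
move=> H; case: (boolP [exists z, (tag z == i) && (f z < g z)]).
- by move=> /existsP [z /andP [H1 H2]]; exists z.
- move=> /existsPn H'; exfalso; move: H; rewrite ltnNge => /negP; apply.
  by apply: leq_sum => z Hz; have := H' z; rewrite Hz /= -leqNgt.
Qed.

Lemma bs_lt f g x : (forall z, tag z == tag x -> f z <= g z) -> f x < g x ->
  bs f (tag x) < bs g (tag x).
Proof.
move=> H Hx; rewrite /bs (bigD1 x) //= [X in _ < X](bigD1 x) //=.
rewrite -addSn; apply: leq_add => //; apply: leq_sum => z /andP [Hz _]; exact: H.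
Qed.

Lemma bs_term f z : f z <= bs f (tag z).
Proof. by rewrite /bs (bigD1 z) //= leq_addr. Qed.

Lemma in_P i m : in_mi (Pideal k i) m <-> 0 < bs m i.
Proof.
split.
- move=> /in_miP [g /mapP [j _ ->] /mdvdP H].
  have := H (Tagged (fun i => 'I_(k i)) j); rewrite ffunE eqxx => H1.
  by apply: leq_trans H1 _; apply: (bs_term m (Tagged (fun i => 'I_(k i)) j)).
- move=> H; have [z [/eqP tz Hz]] : exists z : E, tag z == i /\ 0 < m z.
    by apply: (bs_ex (f := fun _ => 0)); rewrite bs0.
  apply/in_miP; exists (mon_var z).
  + apply/mapP; case: z tz Hz => i0 j0 /= tz Hz; subst i0; exists j0 => //.
    by rewrite mem_enum.
  + apply/mdvdP => t; rewrite ffunE; case: eqP => [->|] //.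
Qed.

Lemma in_pow i a m : in_mi (mi_pow (Pideal k i) a) m <-> a <= bs m i.
Proof.
elim: a m => [|a IH] m.
- split => // _; exact: in_mi_unit.
- rewrite /mi_pow iterS -/(mi_pow _ a) in_mi_mul; split.
  + move=> [m1 [m2 [/in_P H1 /IH H2 H]]].
    apply: leq_trans (bs_mono (f := fun z => m1 z + m2 z) i H); rewrite bs_add.
    lia.
  + move=> Ha.
    have [z [tz Hz]] : exists z : E, tag z == i /\ 0 < m z.
      by apply: (bs_ex (f := fun _ => 0)); rewrite bs0; lia.
    exists (mon_var z), [ffun t => m t - (t == z)]; split.
    * by apply/in_P; rewrite bs_var tz.
    * apply/IH.
      have: bs m i <= bs [ffun t => m t - (t == z)] i + bs (mon_var z) i.
        rewrite -bs_add; apply: bs_mono => t; rewrite !ffunE; case: eqP => /= _; lia.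
      rewrite bs_var tz /=. move=> HH; rewrite -ltnS; apply: leq_trans Ha _; by rewrite -addn1.
    * move=> t; rewrite !ffunE; case: eqP => [->|_] /=; [by rewrite add1n subn1 prednK | by rewrite subn0].
Qed.

Lemma in_fold (a : mon 'I_n) (L : seq 'I_n) m : uniq L ->
  in_mi (foldr (fun i acc => mi_mul (mi_pow (Pideal k i) (a i)) acc) (mi_unit _) L) m <->
  (forall i, i \in L -> a i <= bs m i).
Proof.
elim: L m => [|i L IH] m /=.
- by move=> _; split => // _; exact: in_mi_unit.
- move=> /andP [iL uL]; rewrite in_mi_mul; split.
  + move=> [m1 [m2 [/in_pow H1 /(IH _ uL) H2 H]]] j.
    rewrite inE => /orP [/eqP ->|jL].
    * apply: leq_trans H1 (bs_mono _ _) => z; exact: leq_trans (leq_addr _ _) (H z).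
    * apply: leq_trans (H2 _ jL) (bs_mono _ _) => z; exact: leq_trans (leq_addl _ _) (H z).
  + move=> H.
    exists [ffun z => if tag z == i then m z else 0],
           [ffun z => if tag z == i then 0 else m z]; split.
    * apply/in_pow; have := H i (mem_head _ _).
      suff -> : bs [ffun z => if tag z == i then m z else 0] i = bs m i by [].
      by apply: eq_bigr => z Hz; rewrite ffunE Hz.
    * apply/(IH _ uL) => j jL; have := H j; rewrite inE jL orbT => /(_ isT).
      suff -> : bs [ffun z => if tag z == i then 0 else m z] j = bs m j by [].
      apply: eq_bigr => z /eqP Hz; rewrite ffunE; case: eqP => // Hzi.
      by move: iL; rewrite -Hzi Hz jL.
    * move=> z; rewrite !ffunE; case: ifP => _; lia.
Qed.

Lemma in_exp I m : in_mi (expansion k I) m <-> in_mi I (pim m).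
Proof.
rewrite /expansion in_mi_flatten; split.
- move=> [a aI /(in_fold _ _ (enum_uniq _)) H]; apply/in_miP; exists a => //.
  apply/mdvdP => i; rewrite ffunE; apply: H; by rewrite mem_enum.
- move=> /in_miP [a aI /mdvdP H]; exists a => //.
  apply/(in_fold _ _ (enum_uniq _)) => i _.
  by have := H i; rewrite ffunE.
Qed.

Lemma minGenE I w : minGen (expansion k I) w <-> minGen I (pim w).
Proof.
split.
- move=> [/in_exp wI Hmin]; split => // v vI /mdvdP vw.
  apply/ffunP => i; apply/eqP; rewrite eqn_leq vw /= leqNgt; apply/negP => lt.
  move: lt; rewrite ffunE => lt.
  have [z [/eqP tz Hz]] : exists z : E, tag z == i /\ 0 < w z.
    by apply: (bs_ex (f := fun _ => 0)); rewrite bs0; apply: leq_trans lt.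
  pose wm : mon E := [ffun t => w t - (t == z)].
  have e : forall i', bs wm i' + (tag z == i') = bs w i'.
    move=> i'; rewrite -bs_var -bs_add; apply: eq_bigr => t _; rewrite !ffunE.
    case: (@eqP _ t z) => [->|_] /=; [by rewrite subnK | by rewrite subn0 addn0].
  have wmI : in_mi (expansion k I) wm.
    apply/in_exp; apply: in_mi_up vI _; apply/mdvdP => i'; rewrite ffunE.
    have := vw i'; rewrite ffunE -(e i').
    case: (@eqP _ (tag z) i') => [Ei|_] /=; last by rewrite addn0.
    subst i'; rewrite -tz in lt; move: lt; rewrite -(e (tag z)) eqxx addn1 ltnS.
    by move=> ? _.
  have := Hmin wm wmI; rewrite (_ : mdvd wm w) //.
    move=> /(_ isT) Ew; have := congr1 (fun f : mon E => f z) Ew => /=; rewrite ffunE eqxx /= => Ez.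
    by move: (ltn_predL (w z)); rewrite -subn1 Ez ltnn Hz.
  by apply/mdvdP => t; rewrite ffunE leq_subr.
- move=> [wI Hmin]; split; first by apply/in_exp.
  move=> w' /in_exp w'I /mdvdP w'w.
  have Hp : pim w' = pim w.
    apply: Hmin => //; apply/mdvdP => i; rewrite !ffunE; exact: bs_mono.
  apply/ffunP => z; apply/eqP; rewrite eqn_leq w'w /= leqNgt; apply/negP => lt.
  have := bs_lt (fun t _ => w'w t) lt.
  by move/ffunP: Hp => /(_ (tag z)); rewrite !ffunE => ->; rewrite ltnn.
Qed.

Lemma pim_mexch (w : mon E) (x y : E) : 0 < w x -> pim (mexch w x y) = mexch (pim w) (tag x) (tag y).
Proof.
move=> Hx; apply/ffunP => i.
have H1 : bs (mexch w x y) i + (tag x == i) = bs w i + (tag y == i).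
  rewrite -!bs_var -!bs_add; apply: eq_bigr => z _; exact: mexchE.
have hp : 0 < bs w (tag x) by apply: leq_trans Hx (bs_term _ _).
move: H1; rewrite !ffunE (eq_sym (tag x)) (eq_sym (tag y)).
case: (@eqP _ i (tag x)) => [Eix|_]; case: (@eqP _ i (tag y)) => [Eiy|_] /=;
  try rewrite -Eix in hp; move=> H1; apply: natE; set A := bs (mexch w x y) i in H1 *; set B := bs w i in H1 hp *; clearbody A B; lia.
Qed.

Lemma mdeg_pim (w : mon E) : mdeg w = mdeg (pim w).
Proof.
rewrite /mdeg (partition_big (fun z : E => tag z) predT) //=.
apply: eq_bigr => i _; rewrite ffunE /bs; exact: eq_bigl.
Qed.

Variable hk : forall i, 0 < k i.

Definition liftm (u : mon 'I_n) : mon E :=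
  [ffun z => if val (tagged z) == 0 then u (tag z) else 0].

Lemma pim_lift u : pim (liftm u) = u.
Proof.
apply/ffunP => i; rewrite ffunE /bs.
rewrite (bigD1 (Tagged (fun i => 'I_(k i)) (Ordinal (hk i)))) //= big1 ?addn0.
- by rewrite ffunE /=.
- move=> z /andP [/eqP tz nz]; rewrite ffunE; case: ifP => // h0; exfalso.
  case: z tz nz h0 => i0 j0 /= tz; subst i0 => nz /eqP h0.
  have ej : j0 = Ordinal (hk i) by apply: val_inj.
  by move: nz; rewrite ej eqxx.
Qed.

Lemma lift_minGen I u : minGen I u -> minGen (expansion k I) (liftm u).
Proof. by move=> H; apply/minGenE; rewrite pim_lift. Qed.
End Exp.

Theorem theorem1p2 (n : nat) (k : 'I_n -> nat) (hk : forall i, 0 < k i)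
    (I : monideal 'I_n) :
  polymatroidal I <-> polymatroidal (expansion k I).
Proof.
split.
- move=> [Hd Hx]; split.
  + move=> w w' /minGenE Hw /minGenE Hw'; rewrite !mdeg_pim; exact: Hd.
  + move=> w w' x /minGenE Hw /minGenE Hw' lt.
    have wx : 0 < w x by apply: leq_ltn_trans lt.
    case: (ltnP (pim w' (tag x)) (pim w (tag x))) => Hi.
    * have [l [Hl Hm]] := Hx _ _ _ Hw Hw' Hi.
      move: Hl; rewrite !ffunE => /bs_ex [z [/eqP tz Hz]].
      exists z; split => //; apply/minGenE; rewrite pim_mexch // tz; exact Hm.
    * have [z [/eqP tz Hz]] : exists z : expvar k, tag z == tag x /\ w z < w' z.
        case: (boolP [exists z, (tag z == tag x) && (w z < w' z)]) =>
          [/existsP [z /andP[H1 H2]] | /existsPn H]; first by exists z.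
        exfalso; move: Hi; rewrite leqNgt => /negP; apply; rewrite !ffunE.
        apply: (bs_lt _ lt) => z tz; have := H z; rewrite tz /= -leqNgt.
        done.
      exists z; split => //; apply/minGenE; rewrite pim_mexch // tz.
      have hp : 0 < pim w (tag x) by rewrite ffunE; apply: leq_trans wx (bs_term _ _).
      by rewrite mexch_id.
- move=> [Hd Hx]; split.
  + move=> u v Hu Hv; rewrite -(pim_lift hk u) -(pim_lift hk v) -!mdeg_pim.
    by apply: Hd; apply: lift_minGen.
  + move=> u v i Hu Hv lt.
    pose x := Tagged (fun i => 'I_(k i)) (Ordinal (hk i)).
    have lt' : liftm k v x < liftm k u x by rewrite !ffunE /=.
    have [z [Hz Hm]] := Hx _ _ x (lift_minGen hk Hu) (lift_minGen hk Hv) lt'.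
    move: Hz; rewrite !ffunE; case: ifP => // _ Hz.
    exists (tag z); split => //.
    move/minGenE: Hm; rewrite pim_mexch ?pim_lift //.
    by rewrite ffunE /=; apply: leq_ltn_trans lt.
Qed.
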